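(* Let $(\Omega,\mathcal{F},(\mathcal{F}_t)_{t\in[0,T]})$ be a filtered space with a probability measure $Q$, let $\rho:[0,T]\to\mathbb{R}$ be a deterministic interest rate, and let $S_t^0=\exp\left(\int_0^t\rho(u)\,du\right)$ be the bond. Let $S_t^1>0$ be an asset whose discounted price $X_t^1=S_t^1/S_t^0$ is a strictly positive $Q$-martingale. For $t\in[0,T]$ let $Q_1'(t)$ be the probability measure with $Q_1'(t)\ll Q$ and $\frac{dQ_1'(t)}{dQ}=\frac{X_T^1}{X_t^1}$. For a strike $K>0$, put $c_t=K\exp\left(-\int_t^T\rho(u)\,du\right)$ and, for $x>0$, let $$\Phi_t\left(\tfrac{dQ_1'(t)}{dQ},x\right)=\mathbf{1}\left\{\tfrac{dQ_1'(t)}{dQ}>\tfrac{c_t}{x}\right\},$$ and let the $Q$-price at time $t$ of the European call $H_C$ with strike $K$, given $S_t^1=x$, be $$p_Q(H_C,x,t)=x\,E_{Q_1'(t)}\left(\Phi_t\left(\tfrac{dQ_1'(t)}{dQ},x\right)\right)-\exp\left(-\int_t^T\rho(u)\,du\right)K\,E_Q\left(\Phi_t\left(\tfrac{dQ_1'(t)}{dQ},x\right)\right).$$ Suppose that for all $t$ the distribution $\mathcal{L}\left(\frac{dQ_1'(t)}{dQ}\,\Big|\,Q\right)$ has a continuous Lebesgue density on $(0,\infty)$. Then for every $s_t^1>0$, $$\frac{d}{dx}p_Q(H_C,x,t)\Big|_{x=s_t^1}=E_{Q_1'(t)}\left(\Phi_t\left(\tfrac{dQ_1'(t)}{dQ},s_t^1\right)\right),$$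 i.e. the ``delta'' of the price process equals the $Q_1'(t)$-power of the test $\Phi_t$.
   Context: The displayed formula for $p_Q(H_C,x,t)$ is the representation of the $Q$-price process of the European call $H_C$ (payoff $(S_T^1-K)^+$) at time $t$ given $S_t^1=x$; $\Phi_t$ is viewed as a statistical (Neyman–Pearson) test of the null hypothesis $\{Q\}$ against the alternative $\{Q_1'(t)\}$, and $E_{Q_1'(t)}(\Phi_t)$ is its power. *)

(* Defs.v *)
From HB Require Import structures.
From mathcomp Require Import all_boot all_order all_algebra.
From mathcomp Require Import all_classical all_reals all_analysis.
Set Implicit Arguments. Unset Strict Implicit. Unset Printing Implicit Defensive.
Import Order.TTheory GRing.Theory Num.Theory.
Import numFieldNormedType.Exports.
Local Open Scope classical_set_scope.
Local Open Scope ring_scope.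

Section defs.
Context {R : realType} {d : measure_display} {Omega : measurableType d}.

Definition filtration (T : R) (F : R -> set (set Omega)) : Prop :=
  (forall t, 0 <= t <= T -> sigma_algebra setT (F t)) /\
  (forall t, 0 <= t <= T -> F t `<=` measurable) /\
  (forall s t, 0 <= s -> s <= t -> t <= T -> F s `<=` F t).

Definition martingale (Q : probability Omega R) (T : R)
    (F : R -> set (set Omega)) (X : R -> Omega -> R) : Prop :=
  (forall t, 0 <= t <= T -> forall B : set R, measurable B -> F t (X t @^-1` B)) /\
  (forall t, 0 <= t <= T -> Q.-integrable setT (fun w => (X t w)%:E)) /\
  (forall s t, 0 <= s -> s <= t -> t <= T -> forall A, F s A ->
     (\int[Q]_(w in A) (X t w)%:E = \int[Q]_(w in A) (X s w)%:E)%E).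

Definition discount (rho : R -> R) (t T : R) : R :=
  expR (- Rintegral lebesgue_measure `[t, T] rho).

Definition bond (rho : R -> R) (t : R) : R :=
  expR (Rintegral lebesgue_measure `[0, t] rho).

Definition NP_test (c x : R) (z : R) : R := \1_[set z' : R | c / x < z'] z.

(* p_Q(H_C, x, t) = x E_{Q1}(Phi_t(Z,x)) - disc * K * E_Q(Phi_t(Z,x)),
   with c = K * disc, Z = dQ1/dQ. *)
Definition call_price (Q Q1 : probability Omega R) (Z : Omega -> R)
    (K disc : R) (x : R) : R :=
  x * fine (\int[Q1]_w (NP_test (K * disc) x (Z w))%:E)
  - disc * K * fine (\int[Q]_w (NP_test (K * disc) x (Z w))%:E).

End defs.

(* Main.v *)
Require Import Defs.
From HB Require Import structures.
From mathcomp Require Import all_boot all_order all_algebra.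
From mathcomp Require Import all_classical all_reals all_analysis.
From mathcomp Require Import measurable_realfun.
From mathcomp Require Import ring lra.
Import Order.TTheory GRing.Theory Num.Theory.
Import Num.Def.
Import numFieldNormedType.Exports.
Local Open Scope classical_set_scope.
Local Open Scope ring_scope.

Lemma ptw {R : realType} (c s h z : R) : 0 < c -> 0 < s -> 0 < h + s -> 0 < z ->
  `| (h+s) * (z * (c/(h+s) < z)%R%:R) - c * (c/(h+s) < z)%R%:R
     - (s * (z * (c/s < z)%R%:R) - c * (c/s < z)%R%:R) - h * (z * (c/s < z)%R%:R) |
  <= `|h| * (c/s) * ((minr (c/s) (c/(h+s)) <= z) && (z <= maxr (c/s) (c/(h+s))))%R%:R.
Proof.
move=> c0 s0 hs0 z0.
set u := c / s; set v := c / (h + s).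
have cu : c = u * s by rewrite /u divfK // gt_eqF.
have cv : c = v * (h + s) by rewrite /v divfK // gt_eqF.
have u0 : 0 < u by rewrite /u divr_gt0.
have -> : (h+s) * (z * (v < z)%R%:R) - c * (v < z)%R%:R
     - (s * (z * (u < z)%R%:R) - c * (u < z)%R%:R) - h * (z * (u < z)%R%:R)
     = ((h+s) * z - c) * ((v < z)%R%:R - (u < z)%R%:R) by ring.
have hab : 0 <= `|h| * u by rewrite mulr_ge0 // ltW.
have [vz|vz] := ltP v z; have [uz|uz] := ltP u z => /=.
- by rewrite subrr mulr0 normr0 mulr_ge0 // ler0n.
- rewrite subr0 mulr1.
  have -> : minr u v <= z by rewrite ge_min (ltW vz) orbT.
  have -> : z <= maxr u v by rewrite le_max uz.
  rewrite mulr1 ger0_norm; last by rewrite cv; nra.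
  rewrite cu. 
  have : (h + s) * z <= (h + s) * u by rewrite ler_pM2l.
  have : 0 <= h.
    rewrite -(ler_pM2r s0) mul0r. 
    have : v * (h + s) < z * (h + s) by rewrite ltr_pM2r.
    rewrite -cv cu => H1.
    have : u * s < u * (h+s) by apply: (lt_le_trans H1); rewrite ler_pM2r.
    rewrite ltr_pM2l // => H2. nra.
  move=> h0; rewrite ger0_norm //; nra.
- rewrite sub0r mulrN1 normrN.
  have -> : minr u v <= z by rewrite ge_min (ltW uz).
  have -> : z <= maxr u v by rewrite le_max vz orbT.
  rewrite mulr1 ler0_norm; last by rewrite cv; nra.
  have : u * (h + s) < z * (h + s) by rewrite ltr_pM2r.
  have v0 : 0 < v by rewrite /v divr_gt0.
  have : h <= 0 by nra.
  move=> h0; rewrite ler0_norm //; nra.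
- by rewrite subrr mulr0 normr0 mulr_ge0 // ler0n.
Qed.

Lemma dens_loc {R : realType} (f : R -> R) (y0 : R) : 0 < y0 ->
  (forall z, 0 < z -> 0 <= f z) -> {within [set z : R | 0 < z], continuous f} ->
  exists M d : R, 0 <= M /\ 0 < d /\ forall a b : R, y0 - d < a -> a <= b -> b < y0 + d ->
    (\int[lebesgue_measure]_(z in (`[a, b]%classic : set R) `&` [set z : R | (0 < z)%R]) (f z)%:E
       <= (M * (b - a))%:E)%E.
Proof.
move=> y00 f0 cf.
have oD : open [set z : R | 0 < z] by rewrite -set_itvoy; exact: interval_open.
have mD : measurable [set z : R | 0 < z] by rewrite -set_itvoy; exact: measurable_itv.
move: (cf); rewrite continuous_open_subspace // => cf'.
have mf : measurable_fun [set z : R | 0 < z] f by exact: open_continuous_measurable_fun.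
have := cf' y0 (mem_set y00) => /cvgrPdist_lt /(_ 1 ltr01) /nbhs_ballP [r r0 Hr].
exists (f y0 + 1), (minr r (y0 / 2)); split; first by rewrite addr_ge0 // f0.
split; first by rewrite lt_min r0 divr_gt0.
move=> a b ya ab yb.
have mI : measurable (`[a, b] `&` [set z : R | 0 < z]) by apply: measurableI => //; exact: measurable_itv.
apply: le_trans.
  apply: (@ge0_le_integral _ _ _ lebesgue_measure _ mI _ (cst (f y0 + 1)%:E)).
  - by move=> z [_ /= z0]; rewrite lee_fin f0.
  - apply/measurable_EFinP; apply: measurable_funS mf => //; exact: subIsetr.
  - exact: measurable_cst.
  - move=> z [/= zab z0]; rewrite lee_fin.
    have : ball y0 r z.
      rewrite /ball /= ltr_norml; move: zab; rewrite in_itv /= => /andP[az zb].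
      have hm : minr r (y0 / 2) <= r by rewrite ge_min lexx.
      apply/andP; split; lra.
    move/Hr => /=; rewrite ltr_norml => /andP[H _]; lra.
rewrite integral_cst //=.
have M0 : (0 <= f y0 + 1)%R by rewrite addr_ge0 // f0.
apply: le_trans.
  apply: lee_wpmul2l; first by rewrite lee_fin.
  apply: measureIl => //; exact: measurable_itv.
have E : lebesgue_measure (`[a, b]%classic : set R) = (b - a)%:E.
  rewrite lebesgue_measure_itv /= lte_fin.
  have [ab'|ab'] := ltP a b; first by rewrite -EFinD.
  have -> : b = a by apply/eqP; rewrite eq_le ab' ab.
  by rewrite subrr.
apply: (@le_trans _ _ ((f y0 + 1)%:E * (b - a)%:E)%E).
  rewrite le_eqVlt; apply/orP; left; apply/eqP; congr (_ * _)%E; exact: E.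
by rewrite -EFinM.
Qed.

Lemma diff_bound {R : realType} (c s h : R) : 0 < c -> 0 < s -> `|h| < s / 2 ->
  `|c / s - c / (h + s)| <= (2 * c / s ^+ 2) * `|h|.
Proof.
move=> c0 s0 hs.
have hs0 : s / 2 < h + s by move: hs; rewrite ltr_norml => /andP[? ?]; lra.
have hs1 : 0 < h + s by lra.
set D := c / s - c / (h + s).
have HD : D * (s * (h + s)) = c * h by rewrite /D; field; rewrite ?gt_eqF //; apply/andP; split; rewrite gt_eqF.
have HDa : `|D| * (s * (h + s)) = c * `|h|.
  by rewrite -[s * (h + s)]ger0_norm ?mulr_ge0 ?ltW // -normrM HD normrM (ger0_norm (ltW c0)).
rewrite mulrAC ler_pdivlMr ?exprn_gt0 //.
have H3 : 0 <= `|D| * s * (h + s - s / 2).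
  by apply: mulr_ge0; [apply: mulr_ge0 => //; exact: ltW | lra].
nra.
Qed.

Section integ.
Context {R : realType} {d : measure_display} {Omega : measurableType d}.
Variable mu : {measure set Omega -> \bar R}.

Lemma iscale (g : Omega -> R) k : mu.-integrable setT (EFin \o g) ->
  mu.-integrable setT (EFin \o (fun w => k * g w)).
Proof.
move=> ig; apply: (eq_integrable measurableT (fun w => k%:E * (EFin \o g) w)%E).
  by move=> w _; rewrite /= EFinM.
exact: integrableZl.
Qed.

Lemma isub (g1 g2 : Omega -> R) : mu.-integrable setT (EFin \o g1) ->
  mu.-integrable setT (EFin \o g2) ->
  mu.-integrable setT (EFin \o (fun w => g1 w - g2 w)).
Proof.
move=> i1 i2; apply: (eq_integrable measurableT ((EFin \o g1) \- (EFin \o g2))%E).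
  by move=> w _; rewrite /= EFinB.
exact: integrableB.
Qed.
End integ.

Lemma key {R : realType} {d : measure_display} {Omega : measurableType d}
  (Q Q1 : probability Omega R) (Z : Omega -> R) (K disc s : R) (f : R -> R) :
  measurable_fun setT Z -> (forall w, 0 < Z w) ->
  (forall A, measurable A -> Q1 A = (\int[Q]_(w in A) (Z w)%:E)%E) ->
  0 < K -> 0 < disc -> 0 < s ->
  (forall z, 0 < z -> 0 <= f z) -> {within [set z : R | 0 < z], continuous f} ->
  (forall B : set R, measurable B -> Q (Z @^-1` B) =
     (\int[lebesgue_measure]_(z in B `&` [set z : R | (0 < z)%R]) (f z)%:E)%E) ->
  is_derive s 1 (call_price Q Q1 Z K disc)
    (fine (\int[Q1]_w (NP_test (K * disc) s (Z w))%:E)%E).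
Proof.
move=> mZ Z0 hQ1 K0 disc0 s0 f0 cf hdens.
set c := K * disc.
have c0 : 0 < c by rewrite mulr_gt0.
pose A x := Z @^-1` [set z | c / x < z].
have mA x : measurable (A x).
  rewrite /A -[X in measurable X]setTI; apply: mZ => //.
  rewrite -set_itvoy; exact: measurable_itv.
have inA x w : (w \in A x) = (c / x < Z w).
  by apply/idP/idP => [/set_mem|/mem_set].
have iZ : Q.-integrable setT (EFin \o Z).
  apply/integrableP; split; first exact/measurable_EFinP.
  rewrite (eq_integral (fun w => (Z w)%:E)); last first.
    by move=> w _; rewrite /= ger0_norm // ltW.
  by rewrite -hQ1 // probability_setT ltry.
have iI x : Q.-integrable setT (EFin \o \1_(A x)) by apply: integrable_indic.
have mI x : measurable_fun setT (\1_(A x) : Omega -> R) by apply: measurable_indic.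
have iZI x : Q.-integrable setT (EFin \o (fun w => Z w * \1_(A x) w)).
  apply: le_integrable iZ => //.
    by apply/measurable_EFinP; apply: measurable_funM.
  move=> w _; rewrite /= lee_fin normrM indicE.
  by case: (w \in A x); rewrite ?normr1 ?normr0 ?mulr1 ?mulr0.
have ha x : fine (\int[Q1]_w (NP_test c x (Z w))%:E)%E
    = \int[Q]_w (Z w * \1_(A x) w).
  rewrite (_ : (fun w => (NP_test c x (Z w))%:E) = (fun w => (\1_(A x) w)%:E)) //.
  rewrite integral_indic // setIT.
  rewrite (_ : fine (Q1 (A x)) = fine (\int[Q]_(w in A x) (Z w)%:E)%E); last by congr fine; exact: hQ1.
  rewrite integral_mkcond /Rintegral; congr fine.
  apply: eq_integral => w _; rewrite patchE indicE.
  by case: (w \in A x); rewrite /= ?mulr1 ?mulr0.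
have hp x : call_price Q Q1 Z K disc x
    = \int[Q]_w (x * (Z w * \1_(A x) w) - c * \1_(A x) w).
  rewrite /call_price -/c ha (mulrC disc K) -/c.
  rewrite RintegralB //; try by apply: iscale.
  by rewrite !RintegralZl.
have iP x : Q.-integrable setT
    (EFin \o (fun w => x * (Z w * \1_(A x) w) - c * \1_(A x) w)).
  by apply: isub; apply: iscale.
set L := \int[Q]_w (Z w * \1_(A s) w).
have [M [dl [M0 [dl0 HM]]]] := dens_loc f (c / s) (divr_gt0 c0 s0) f0 cf.
have est h : h != 0 -> `|h| < s / 2 -> `|c / s - c / (h + s)| < dl ->
   `|L - h^-1 * (call_price Q Q1 Z K disc (h + s) - call_price Q Q1 Z K disc s)|
   <= c / s * M * `|c / s - c / (h + s)|.
  move=> h0 hs hdl.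
  have hs0 : 0 < h + s by move: hs; rewrite ltr_norml => /andP[? ?]; lra.
  set u := c / s; set v := c / (h + s).
  set a := minr u v; set b := maxr u v.
  set J := Z @^-1` (`[a, b]%classic : set R).
  have mJ : measurable J.
    rewrite /J -[X in measurable X]setTI; apply: mZ => //; exact: measurable_itv.
  have inJ w : (w \in J) = (a <= Z w <= b).
    apply/idP/idP => [/set_mem /=|H]; first by [].
    exact/mem_set.
  set G := fun w => ((h + s) * (Z w * \1_(A (h + s)) w) - c * \1_(A (h + s)) w)
     - (s * (Z w * \1_(A s) w) - c * \1_(A s) w) - h * (Z w * \1_(A s) w).
  have iG : Q.-integrable setT (EFin \o G).
    rewrite /G; apply: (@isub _ _ _ Q (fun w => (h + s) * (Z w * \1_(A (h + s)) w) - c * \1_(A (h + s)) w - (s * (Z w * \1_(A s) w) - c * \1_(A s) w))); [apply: isub; exact: iP|apply: iscale; exact: iZI].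
  have hG : call_price Q Q1 Z K disc (h + s) - call_price Q Q1 Z K disc s - h * L
      = \int[Q]_w G w.
    by rewrite !hp /L -RintegralZl // -RintegralB // -RintegralB //;
      first [exact: iZI | exact: iP | (apply: isub; exact: iP) | (apply: iscale; exact: iZI)].
  move: hG; set X := call_price Q Q1 Z K disc (h + s) - call_price Q Q1 Z K disc s.
  move=> hG.
  have -> : L - h^-1 * X = - (h^-1 * (X - h * L)) by field.
  rewrite normrN hG normrM normfV.
  have [ab [bma [ua bu]]] : a <= b /\ b - a = `|u - v| /\ u - `|u - v| <= a /\ b <= u + `|u - v|.
    have au : a <= u by rewrite /a ge_min lexx.
    have av : a <= v by rewrite /a ge_min lexx orbT.
    have ub : u <= b by rewrite /b le_max lexx.
    have vb : v <= b by rewrite /b le_max lexx orbT.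
    have apb : a + b = u + v by rewrite /a /b addr_min_max.
    have [uv|vu] := leP u v.
      have ua : u <= a by rewrite /a le_min lexx uv.
      rewrite ler0_norm ?subr_le0 //; split; [lra|split; [lra|split; lra]].
    have va : v <= a by rewrite /a le_min lexx ltW.
    rewrite ger0_norm; last by rewrite subr_ge0 ltW.
    split; [lra|split; [lra|split; lra]].
  have b1 : `|\int[Q]_w G w| <= \int[Q]_w (`|h| * u * \1_J w).
    apply: le_trans; first exact: le_normr_Rintegral.
    apply: le_Rintegral => //.
    - exact: integrable_norm.
    - by apply: iscale; exact: integrable_indic.
    - move=> w _; rewrite /G !indicE !inA inJ; exact: ptw.
  have b2 : \int[Q]_w (`|h| * u * \1_J w) = `|h| * u * fine (Q J).
    rewrite RintegralZl //; last exact: integrable_indic.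
    by rewrite /Rintegral integral_indic // setIT.
  have b3 : fine (Q J) <= M * (b - a).
    have la : u - dl < a by lra.
    have lb : b < u + dl by lra.
    have H := HM a b la ab lb.
    have b3' : (Q J <= (M * (b - a))%:E)%E.
      by move: H; rewrite -hdens //; exact: measurable_itv.
    rewrite -lee_fin fineK //; exact: fin_num_measure.
  have u0 : 0 <= u by rewrite ltW // divr_gt0.
  rewrite -bma.
  apply: (@le_trans _ _ (`|h|^-1 * (`|h| * u * fine (Q J)))).
    by rewrite ler_wpM2l ?invr_ge0 // -b2.
  have -> : `|h|^-1 * (`|h| * u * fine (Q J)) = u * fine (Q J).
    by field; rewrite normr_eq0.
  rewrite -mulrA; exact: ler_wpM2l.
set p := call_price Q Q1 Z K disc.
rewrite ha -/L.
have k0 : 0 < 2 * c / s ^+ 2 by rewrite divr_gt0 ?mulr_gt0 ?exprn_gt0.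
set k := 2 * c / s ^+ 2.
have cs0 : 0 < c / s by rewrite divr_gt0.
have Hc : (fun h => h^-1 *: ((p \o shift s) (h *: 1) - p s)) @ 0^' --> L.
  apply/cvgrPdist_le => e e0.
  near=> h.
  have hne : h != 0 by near: h; exact: nbhs_dnbhs_neq.
  have h1 : `|h| < s / 2 by near: h; apply: dnbhs0_lt; rewrite divr_gt0.
  have h2 : `|h| < dl / k by near: h; apply: dnbhs0_lt; rewrite divr_gt0.
  have h3 : `|h| < e / (c / s * (M + 1) * k).
    near: h; apply: dnbhs0_lt; rewrite divr_gt0 // mulr_gt0 // mulr_gt0 //; lra.
  have db := diff_bound c s h c0 s0 h1; rewrite -/k in db.
  rewrite /= scaler1.
  have hv : `|c / s - c / (h + s)| < dl.
    by move: h2; rewrite ltr_pdivlMr // => h2; lra.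
  apply: le_trans (est h hne h1 hv) _.
  move: h3; rewrite ltr_pdivlMr; last by rewrite mulr_gt0 // mulr_gt0 //; lra.
  move=> h3.
  have := ler_wpM2l (mulr_ge0 (ltW cs0) M0) db.
  have : 0 <= c / s * k * `|h| by rewrite mulr_ge0 // mulr_ge0 // ltW.
  lra.
apply: DeriveDef; first exact: cvgP Hc.
exact: cvg_lim Hc.
Unshelve. all: by end_near.
Qed.
Theorem theorem1 (R : realType) (d : measure_display) (Omega : measurableType d)
  (Q : probability Omega R) (T : R) (F : R -> set (set Omega))
  (rho : R -> R) (S1 : R -> Omega -> R) (Q1 : R -> probability Omega R) (K : R) :
  0 < T ->
  filtration T F ->
  lebesgue_measure.-integrable `[0, T] (fun u => (rho u)%:E) ->
  (forall t w, 0 <= t <= T -> 0 < S1 t w) ->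
  (* the discounted price X^1_t = S^1_t / S^0_t is a strictly positive Q-martingale *)
  martingale Q T F (fun t w => S1 t w / bond rho t) ->
  (* dQ1'(t)/dQ = X^1_T / X^1_t *)
  (forall t, 0 <= t <= T -> forall A, measurable A ->
     Q1 t A = (\int[Q]_(w in A)
        ((S1 T w / bond rho T) / (S1 t w / bond rho t))%:E)%E) ->
  0 < K ->
  (* the Q-law of dQ1'(t)/dQ has a continuous Lebesgue density on (0,oo) *)
  (forall t, 0 <= t < T -> exists f : R -> R,
     (forall z, 0 < z -> 0 <= f z) /\
     {within [set z : R | 0 < z], continuous f} /\
     forall B : set R, measurable B ->
       Q ((fun w => (S1 T w / bond rho T) / (S1 t w / bond rho t)) @^-1` B)
       = (\int[lebesgue_measure]_(z in B `&` [set z : R | (0 < z)%R]) (f z)%:E)%E) ->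
  forall t, 0 <= t < T -> forall s : R, 0 < s ->
    let Z := fun w => (S1 T w / bond rho T) / (S1 t w / bond rho t) in
    is_derive s 1
      (call_price Q (Q1 t) Z K (discount rho t T))
      (fine (\int[Q1 t]_w (NP_test (K * discount rho t T) s (Z w))%:E)%E).
Proof.
move=> T0 hF hrho hS1 hmart hQ1 K0 hdens t ht s s0 Z.
have /andP[tT0 tT] := ht.
have hT : 0 <= T <= T by rewrite lexx andbT ltW.
have ht' : 0 <= t <= T by rewrite tT0 ltW.
have bond0 u : 0 < bond rho u by rewrite /bond expR_gt0.
have mX u : 0 <= u <= T -> measurable_fun setT (fun w => S1 u w / bond rho u).
  move=> hu _ B mB; rewrite setTI; apply: (hF.2.1 u hu); exact: (hmart.1 u hu B mB).
have Xpos u w : 0 <= u <= T -> 0 < S1 u w / bond rho u.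
  by move=> hu; rewrite divr_gt0 // hS1.
have Zpos w : 0 < Z w by rewrite /Z divr_gt0 // Xpos.
have mZ' : measurable_fun setT (fun w => expR (ln (S1 T w / bond rho T) - ln (S1 t w / bond rho t))).
  apply: measurableT_comp; first exact: measurable_expR.
  apply: measurable_funB.
    apply: measurableT_comp; first exact: measurable_ln.
    exact: mX.
  apply: measurableT_comp; first exact: measurable_ln.
  exact: mX.
have EZ : forall w, expR (ln (S1 T w / bond rho T) - ln (S1 t w / bond rho t)) = (S1 T w / bond rho T) / (S1 t w / bond rho t).
  move=> w; have p1 := Xpos T w hT; have p2 := Xpos t w ht'.
  rewrite expRB.
  have q1 : S1 T w / bond rho T \in Num.pos by rewrite posrE.
  have q2 : S1 t w / bond rho t \in Num.pos by rewrite posrE.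
  move: q1 q2; move: (S1 T w / bond rho T) (S1 t w / bond rho t) => a b qa qb.
  by rewrite (lnK qa) (lnK qb).
have mZ : measurable_fun setT Z.
  by apply: eq_measurable_fun mZ' => w _; exact: EZ.
have disc0 : 0 < discount rho t T by rewrite /discount expR_gt0.
have [f [f0 [cf hf]]] := hdens t ht.
exact: (key Q (Q1 t) Z K (discount rho t T) s f mZ Zpos (hQ1 t ht') K0 disc0 s0 f0 cf hf).
Qed.
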